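(* Let $p\in(0,1)$ and let $(\lambda_n)_{n\ge1}$ be a sequence with $\lambda_1=1$ and $0\le\lambda_n\le\lambda_{n-1}$ for all $n>1$. Let $r_1,r_2,\dots$ be $\{0,1\}$-valued random variables with $\Pr(r_1=1)=p$ and, for every $n\ge2$, $\Pr(r_n=1\mid r_1,\dots,r_{n-1})=\lambda_n p+(1-\lambda_n)\bar p_{n-1}$, where $\bar p_m=\frac1m\sum_{i=1}^m r_i$. For arbitrary (deterministic) values $\hat\lambda_i\in(0,1]$, $i\ge2$, define $\hat r_1=r_1$ and $\hat r_i=\frac{r_i-(1-\hat\lambda_i)\bar p_{i-1}}{\hat\lambda_i}$ for $i\ge2$, and for weights $\omega_1,\dots,\omega_n>0$ define $\hat p_n=\frac{\sum_{i=1}^n\omega_i\hat r_i}{\sum_{i=1}^n\omega_i}$. Then $\mathbb{E}[\hat r_i]=p$ for every $i\ge1$, and consequently $\mathbb{E}[\hat p_n]=p$.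
   Context: $\hat\lambda_i$ is an estimate of $\lambda_i$ (which need not be correct); $\hat r_i$ is the affine correction of the $i$-th rating and $\hat p_n$ the affine (weighted-mean) estimator of $p$. *)

(* Defs.v *)
From HB Require Import structures.
From mathcomp Require Import all_boot all_order all_algebra.
From mathcomp Require Import all_classical all_reals all_analysis.
Set Implicit Arguments. Unset Strict Implicit. Unset Printing Implicit Defensive.
Import Order.TTheory GRing.Theory Num.Theory.
Local Open Scope ring_scope.

(* indices are 1-based as in the paper: r 1, r 2, ... ; r 0 is unused *)

Definition pbar {T} {R : realType} (r : nat -> T -> R) (m : nat) (w : T) : R :=
  (\sum_(1 <= i < m.+1) r i w) / m%:R.

Definition rhat {T} {R : realType} (r : nat -> T -> R) (lh : nat -> R)
  (i : nat) (w : T) : R :=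
  if (i <= 1)%N then r i w
  else (r i w - (1 - lh i) * pbar r i.-1 w) / lh i.

Definition phat {T} {R : realType} (r : nat -> T -> R) (lh : nat -> R)
  (om : nat -> R) (n : nat) (w : T) : R :=
  (\sum_(1 <= i < n.+1) om i * rhat r lh i w) / (\sum_(1 <= i < n.+1) om i).

Definition history {T} {R : realType} (r : nat -> T -> R) (h : nat -> bool)
  (n : nat) : set T :=
  [set w | forall i, (1 <= i < n)%N -> r i w = (h i)%:R].

Definition hbar {R : realType} (h : nat -> bool) (m : nat) : R :=
  (\sum_(1 <= i < m.+1) ((h i)%:R : R)) / m%:R.

(* Main.v *)
Require Import Defs.
From HB Require Import structures.
From mathcomp Require Import all_boot all_order all_algebra.
From mathcomp Require Import all_classical all_reals all_analysis.
From mathcomp.algebra_tactics Require Import ring lra.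
Import Order.TTheory GRing.Theory Num.Theory.
Local Open Scope ring_scope.
Local Open Scope classical_set_scope.

Definition upd (h : nat -> bool) (k : nat) (b : bool) : nat -> bool :=
  fun i => if i == k then b else h i.

Fixpoint hists (m : nat) : seq (nat -> bool) :=
  if m is m'.+1 then
    map (fun h => upd h m true) (hists m') ++ map (fun h => upd h m false) (hists m')
  else [:: fun _ => false].

Lemma history_ext {T} {R : realType} (r : nat -> T -> R) h h' k :
  (forall i, (1 <= i < k)%N -> h i = h' i) -> history r h k = history r h' k.
Proof.
move=> e; apply/seteqP; split => w /= H i hi; [rewrite -e // | rewrite e //]; exact: H.
Qed.

Lemma history1 {T} {R : realType} (r : nat -> T -> R) h : history r h 1 = setT.
Proof. by apply/seteqP; split => // w _ i; case: i => [|[|i]]. Qed.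

Lemma historyS {T} {R : realType} (r : nat -> T -> R) h k : (1 <= k)%N ->
  history r h k.+1 = history r h k `&` [set w | r k w = (h k)%:R].
Proof.
move=> hk; apply/seteqP; split => w /=.
- move=> H; split; first by move=> i /andP[a b]; apply: H; rewrite a /= ltnS ltnW.
  by apply: H; rewrite hk /=.
- move=> [H Hk] i /andP[a b]; rewrite ltnS leq_eqVlt in b.
  by case/orP: b => [/eqP->|b] //; apply: H; rewrite a.
Qed.

Theorem theoremA9 (d : measure_display) (T : measurableType d) (R : realType)
  (P : probability T R) (p : R) (lam lh : nat -> R) (r : nat -> T -> R) :
  0 < p < 1 ->
  lam 1%N = 1 ->
  (forall n, (1 < n)%N -> 0 <= lam n <= lam n.-1) ->
  (forall n, (1 <= n)%N -> measurable_fun setT (r n)) ->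
  (forall n w, (1 <= n)%N -> r n w = 0 \/ r n w = 1) ->
  P [set w | r 1%N w = 1] = p%:E ->
  (forall n (h : nat -> bool), (2 <= n)%N ->
     P (history r h n `&` [set w | r n w = 1]) =
     ((lam n * p + (1 - lam n) * hbar h n.-1)%:E * P (history r h n))%E) ->
  (forall i, (2 <= i)%N -> 0 < lh i <= 1) ->
  (forall i, (1 <= i)%N -> ('E_P[rhat r lh i] = p%:E)%E) /\
  (forall n (om : nat -> R), (1 <= n)%N -> (forall i, (1 <= i <= n)%N -> 0 < om i) ->
     ('E_P[phat r lh om n] = p%:E)%E).
Proof.
move=> p01 lam1 lamdec rm r01 Pr1 Hcond lhP.
pose mu := fun X : set T => fine (P X).
have PE : forall X, measurable X -> P X = (mu X)%:E.
  by move=> X mX; rewrite /mu fineK // fin_num_measure.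
have muU : forall X Y, measurable X -> measurable Y -> X `&` Y = set0 ->
    mu (X `|` Y) = mu X + mu Y.
  by move=> X Y mX mY XY; rewrite /mu measureU // fineD // fin_num_measure.
have mA : forall n c, (1 <= n)%N -> measurable [set w | r n w = c].
  move=> n c hn; have := rm n hn measurableT [set c] (measurable_set1 c).
  by rewrite setTI.
have mH : forall h k, measurable (history r h k).
  move=> h; elim=> [|k IH]; first by rewrite (_ : history r h 0 = setT) //;
    apply/seteqP; split => // w _ i; case: i.
  case: k IH => [|k] IH; first by rewrite history1.
  by rewrite historyS //; apply: measurableI => //; apply: mA.
have msplit : forall k B, (1 <= k)%N -> measurable B ->
    mu B = mu (B `&` [set w | r k w = 1]) + mu (B `&` [set w | r k w = 0]).
  move=> k B hk mB; rewrite -muU.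
  - congr mu; apply/seteqP; split => w /=; last by case=> [[]|[]].
    move=> Bw; case: (r01 k w hk) => e; [right|left]; by [].
  - exact: measurableI (mB) (mA _ _ hk).
  - exact: measurableI (mB) (mA _ _ hk).
  - apply/seteqP; split => w //= [[_ a] [_ b]]; move: a; rewrite b => /eqP.
    by rewrite eq_sym oner_eq0.
have L : forall m B, measurable B ->
    \sum_(h <- hists m) mu (history r h m.+1 `&` B) = mu B.
  elim=> [|m IH] B mB /=; first by rewrite big_seq1 history1 setTI.
  have Hu : forall h b, history r (upd h m.+1 b) m.+2 =
      history r h m.+1 `&` [set w | r m.+1 w = b%:R].
    move=> h b; rewrite historyS // (@history_ext _ _ r _ h); last first.
      by move=> i /andP[_ hi]; rewrite /upd ifN // ltn_eqF.
    by rewrite /upd eqxx.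
  rewrite big_cat !big_map /=.
  under eq_bigr => h _ do rewrite Hu -setIA.
  under [X in _ + X]eq_bigr => h _ do rewrite Hu -setIA.
  rewrite !IH; first by rewrite (msplit m.+1 B) // (setIC _ B) (setIC _ B).
  1,2: by apply: measurableI => //; exact: mA.
have L' : forall m i, (1 <= i <= m)%N ->
    \sum_(h <- hists m) (h i)%:R * mu (history r h m.+1) = mu [set w | r i w = 1].
  move=> m i /andP[i1 im]; rewrite -(L m _ (mA i 1 i1)); apply: eq_bigr => h _.
  have im' : (1 <= i < m.+1)%N by rewrite i1 ltnS.
  case hi : (h i) => /=.
  - rewrite mul1r; congr mu; apply/seteqP; split => w /=; last by case.
    by move=> Hw; split => //; have := Hw i im'; rewrite hi /= mulr1n.
  - rewrite mul0r (_ : _ `&` _ = set0) ?/mu ?measure0 //.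
    apply/seteqP; split => w // [Hw e]; have := Hw i im'; rewrite hi e /= mulr0n.
    by move/eqP; rewrite oner_eq0.
have Rec : forall m, (1 <= m)%N -> mu [set w | r m.+1 w = 1] =
    lam m.+1 * p + (1 - lam m.+1) *
      ((\sum_(1 <= i < m.+1) mu [set w | r i w = 1]) / m%:R).
  move=> m m1.
  have step : forall h, mu (history r h m.+1 `&` [set w | r m.+1 w = 1]) =
      (lam m.+1 * p + (1 - lam m.+1) * hbar h m) * mu (history r h m.+1).
    by move=> h; rewrite /mu (Hcond m.+1 h m1) (PE _ (mH h m.+1)) /=.
  rewrite -[LHS](L m _ (mA m.+1 1 isT)).
  under eq_bigr => h _ do rewrite step mulrDl.
  rewrite big_split /= -mulr_sumr.
  have S1 : \sum_(h <- hists m) mu (history r h m.+1) = 1.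
    transitivity (mu setT); last by rewrite /mu probability_setT.
    rewrite -(L m setT measurableT); apply: eq_bigr => h _; by rewrite setIT.
  rewrite S1 mulr1; congr (_ + _).
  under eq_bigr => h _ do rewrite -mulrA.
  rewrite -mulr_sumr; congr (_ * _).
  rewrite /hbar.
  transitivity ((\sum_(h <- hists m) \sum_(1 <= i < m.+1)
      (h i)%:R * mu (history r h m.+1)) / m%:R).
    rewrite mulr_suml; apply: eq_bigr => h _.
    by rewrite -mulr_suml mulrAC.
  congr (_ / _); rewrite exchange_big /=.
  by apply: eq_big_nat => i him; apply: L'.
have Ap : forall n, (1 <= n)%N -> mu [set w | r n w = 1] = p.
  have : forall N n, (1 <= n <= N)%N -> mu [set w | r n w = 1] = p.
    elim=> [|N IH] n /andP[n1 nN]; first by move: (leq_trans n1 nN).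
    case: n n1 nN => [//|[|k]] _ nN; first by rewrite /mu Pr1.
    rewrite (Rec k.+1 isT).
    have -> : \sum_(1 <= i < k.+2) mu [set w | r i w = 1] =
        \sum_(1 <= i < k.+2) p.
      apply: eq_big_nat; move=> i /andP[i1 ik]; apply: IH; rewrite i1 /=; exact: leq_trans ik nN.
    rewrite sumr_const_nat subSS subn0 -[p *+ _]mulr_natl.
    by field; rewrite nat1r pnatr_eq0.
  by move=> H n n1; apply: (H n); rewrite n1 leqnn.
pose Good := fun (f : T -> R) (c : R) =>
  f \in Lfun P 1%E /\ ('E_P[f] = c%:E)%E.
have GoodE : forall f g c c', Good f c -> f =1 g -> c = c' -> Good g c'.
  by move=> f g c c' Gf /funext <- <-.
have Good0 : Good (cst 0) 0.
  by split; [exact: Lfun_cst | exact: expectation_cst].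
have GoodD : forall f g a b, Good f a -> Good g b -> Good (f \+ g) (a + b).
  move=> f g a b [fL fE] [gL gE]; split; first exact: rpredD.
  by rewrite expectationD // fE gE EFinD.
have GoodZ : forall f a k, Good f a -> Good (k \o* f) (k * a).
  move=> f a k [fL fE]; split.
    have -> : k \o* f = k *: f by apply/funext => w /=; rewrite mulrC.
    exact: rpredZ.
  by rewrite expectationZl // fE EFinM.
have GoodS : forall (F : nat -> T -> R) (c : nat -> R) (s : seq nat),
    (forall i, i \in s -> Good (F i) (c i)) ->
    Good (fun w => \sum_(i <- s) F i w) (\sum_(i <- s) c i).
  move=> F c; elim=> [|a s IH] H.
    by apply: GoodE Good0 _ _; [move=> w; rewrite big_nil | rewrite big_nil].
  apply: GoodE (GoodD _ _ _ _ (H a (mem_head _ _))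
                  (IH (fun i (iS : i \in s) => H i (@mem_behead _ (a :: s) i iS)))) _ _.
  - by move=> w /=; rewrite big_cons.
  - by rewrite big_cons.
have Gr : forall n, (1 <= n)%N -> Good (r n) p.
  move=> n n1.
  apply: (GoodE (\1_[set w | r n w = 1]) _ (mu [set w | r n w = 1])).
  - split; first by apply/Lfun1_integrable; exact: integrable_indic (mA _ _ n1).
    by rewrite expectation_indic ?PE //; exact: mA.
  - move=> w; rewrite indicE; case: (r01 n w n1) => e; rewrite e.
      rewrite memNset //= e => /eqP; by rewrite eq_sym oner_eq0.
    by rewrite mem_set.
  - exact: Ap.
have Gpbar : forall m, (1 <= m)%N -> Good (pbar r m) p.
  move=> m m1.
  apply: (GoodE _ _ _ _ (GoodZ _ _ (m%:R^-1) (GoodS r (fun _ => p) (index_iota 1 m.+1) _))).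
  - by move=> i; rewrite mem_index_iota => /andP[i1 _]; exact: Gr.
  - by move=> w.
  - rewrite sumr_const_nat subSS subn0 -mulr_natl.
    by field; rewrite pnatr_eq0 -lt0n.
have Grhat : forall i, (1 <= i)%N -> Good (rhat r lh i) p.
  case=> [//|[|k]] _.
  - by apply: GoodE (Gr 1%N isT) _ _.
  - have /andP[l0 l1] := lhP k.+2 isT.
    have ln : lh k.+2 != 0 by rewrite gt_eqF.
    apply: (GoodE _ _ _ _ (GoodD _ _ _ _ (GoodZ _ _ (lh k.+2)^-1 (Gr k.+2 isT))
      (GoodZ _ _ (- (1 - lh k.+2) / lh k.+2) (Gpbar k.+1 isT)))).
    + move=> w /=; rewrite /rhat /=.
      by field.
    + by field.
have Gphat : forall n om, (1 <= n)%N -> (forall i, (1 <= i <= n)%N -> 0 < om i) ->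
    Good (phat r lh om n) p.
  move=> n om n1 omP.
  set S := \sum_(1 <= i < n.+1) om i.
  have S0 : 0 < S.
    rewrite /S big_ltn //; have h1 := omP 1%N n1.
    have h2 : 0 <= \sum_(2 <= i < n.+1) om i.
      rewrite big_nat_cond; apply: sumr_ge0 => i /andP[/andP[i2 iN] _].
      by apply/ltW/omP; rewrite (ltnW i2).
    lra.
  apply: (GoodE _ _ _ _ (GoodS (fun i => (S^-1 * om i) \o* rhat r lh i)
    (fun i => (S^-1 * om i) * p) (index_iota 1 n.+1) _)).
  - move=> i; rewrite mem_index_iota => /andP[i1 _].
    by apply: GoodZ; exact: Grhat.
  - move=> w; rewrite /phat mulr_suml; apply: eq_bigr => i _ /=.
    rewrite -/S; ring.
  - rewrite -/S.
    by rewrite -mulr_suml -mulr_sumr -/S mulVf ?mul1r // gt_eqF.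
split; first by move=> i i1; case: (Grhat i i1).
by move=> n om n1 omP; case: (Gphat n om n1 omP).
Qed.
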